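(* Let $p$ be a prime and let $\sigma$ and $\alpha$ be cardinals with $m(\sigma)\le\alpha$ and $\alpha^\omega\le\sigma$. Then the topological group $\mathbb{Z}(p)^\sigma$ contains an independent $G_\delta$-dense subset $H$ such that the subgroup generated by $H$ (with the subspace topology) has property $\mathfrak{h}$.
   Context: $\mathbb{Z}(p)$ is the cyclic group of order $p$ (discrete), and $\mathbb{Z}(p)^\sigma$ carries the product topology. A subset of $\mathbb{Z}(p)^\sigma$ is independent if it is linearly independent over $\mathbb{Z}(p)$. A subset is $G_\delta$-dense if it meets every nonempty $G_\delta$-subset. For an infinite cardinal $\alpha$, $m(\alpha)$ is the least cardinality of a $G_\delta$-dense subset of a compact group of weight $\alpha$ (independent of the compact group chosen). A subgroup $N$ of a topological Abelian group $K$ is $h$-embedded if every homomorphism $N\to\mathbb{T}$ ($\mathbb{T}$ the circle group) extends to a continuous homomorphism $K\to\mathbb{T}$; $K$ has property $\mathfrak{h}$ if all its countable subgroups are $h$-embedded. *)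

(* Defs.v *)
From mathcomp Require Import all_boot all_algebra.
From Stdlib Require Import Reals.
Set Implicit Arguments. Unset Strict Implicit. Unset Printing Implicit Defensive.
Import GRing.Theory.

Section ZpPower.
Variables (p : nat) (S : Type).
Local Notation G := (S -> 'F_p).
Local Open Scope ring_scope.

Definition zzero : G := fun _ => 0.
Definition zadd (f g : G) : G := fun x => f x + g x.
Definition zopp (f : G) : G := fun x => - f x.

(* product topology of discrete factors: U is open iff every point of U has
   a basic neighbourhood (determined by finitely many coordinates) inside U *)
Definition zopen (U : G -> Prop) : Prop :=
  forall f, U f -> exists F : list S,
    forall g, (forall i, List.In i F -> g i = f i) -> U g.

Definition Gdelta_dense (D : G -> Prop) : Prop :=
  forall U : nat -> G -> Prop, (forall n, zopen (U n)) ->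
    (exists f, forall n, U n f) -> exists f, D f /\ forall n, U n f.

Definition independent (H : G -> Prop) : Prop :=
  forall (n : nat) (h : 'I_n -> G) (c : 'I_n -> 'F_p),
    injective h -> (forall i, H (h i)) ->
    (forall x, \sum_(i < n) c i * h i x = 0) -> forall i, c i = 0.

Inductive gen (H : G -> Prop) : G -> Prop :=
| gen_base f : H f -> gen H f
| gen_zero : gen H zzero
| gen_add f g : gen H f -> gen H g -> gen H (zadd f g)
| gen_opp f : gen H f -> gen H (zopp f).

Definition is_subgroup (C : G -> Prop) : Prop :=
  C zzero /\ (forall f g, C f -> C g -> C (zadd f g)) /\ (forall f, C f -> C (zopp f)).

Definition countable_set (C : G -> Prop) : Prop :=
  exists e : G -> nat, forall f g, C f -> C g -> e f = e g -> f = g.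

(* the circle group T = {(a,b) in R^2 | a^2+b^2 = 1}, complex multiplication *)
Definition on_circle (z : R * R) : Prop :=
  Rplus (Rmult (fst z) (fst z)) (Rmult (snd z) (snd z)) = R1.
Definition cmul (z w : R * R) : R * R :=
  (Rminus (Rmult (fst z) (fst w)) (Rmult (snd z) (snd w)),
   Rplus (Rmult (fst z) (snd w)) (Rmult (snd z) (fst w))).
Definition circ_dist (z w : R * R) : R :=
  Rmax (Rabs (Rminus (fst z) (fst w))) (Rabs (Rminus (snd z) (snd w))).

Definition continuous_on (N : G -> Prop) (psi : G -> R * R) : Prop :=
  forall f, N f -> forall eps : R, Rlt R0 eps ->
    exists F : list S, forall g, N g ->
      (forall i, List.In i F -> g i = f i) -> Rlt (circ_dist (psi g) (psi f)) eps.

Definition h_embedded (N C : G -> Prop) : Prop :=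
  forall chi : G -> R * R,
    (forall f, C f -> on_circle (chi f)) ->
    (forall f g, C f -> C g -> chi (zadd f g) = cmul (chi f) (chi g)) ->
    exists psi : G -> R * R,
      (forall f, N f -> on_circle (psi f)) /\
      (forall f g, N f -> N g -> psi (zadd f g) = cmul (psi f) (psi g)) /\
      continuous_on N psi /\
      (forall f, C f -> psi f = chi f).

Definition property_h (N : G -> Prop) : Prop :=
  forall C : G -> Prop, is_subgroup C -> (forall f, C f -> N f) ->
    countable_set C -> h_embedded N C.

(* m(|S|) <= |A|, computed in the compact group Z(p)^S (of weight |S|):
   some G_delta-dense subset of Z(p)^S injects into A *)
Definition m_le (A : Type) : Prop :=
  exists D : G -> Prop, Gdelta_dense D /\
    exists e : G -> A, forall f g, D f -> D g -> e f = e g -> f = g.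

End ZpPower.

(* Main.v *)
Require Import Defs.
From mathcomp Require Import all_boot all_algebra.
From Stdlib Require Import Reals.
From Stdlib Require Import ClassicalEpsilon FunctionalExtensionality.
From Stdlib Require Cantor List.
From mathcomp Require Import Rstruct complex.
Set Implicit Arguments. Unset Strict Implicit. Unset Printing Implicit Defensive.
Import GRing.Theory.
Local Open Scope ring_scope.

Definition pdec (P : Prop) : {P} + {~ P} := excluded_middle_informative P.
Definition cid' {T : Type} {P : T -> Prop} (H : exists x, P x) : {x | P x} :=
  constructive_indefinite_description P H.

Section FpLemmas.
Variable p : nat. Hypothesis hp : prime p.
Lemma Fp_lt (x : 'F_p) : (nat_of_ord x < p)%nat.
Proof. apply: leq_trans (ltn_ord x) _; by rewrite (Fp_cast hp). Qed.
Lemma Fp_valK (x : 'F_p) : (nat_of_ord x)%:R = x.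
Proof. apply: val_inj. by rewrite /= (val_Fp_nat hp) modn_small // Fp_lt. Qed.
Lemma Fp_addv (x y : 'F_p) : nat_of_ord (x + y) = modn (addn x y) p.
Proof. have := val_Fp_nat hp (x + y)%nat. by rewrite natrD !Fp_valK. Qed.
End FpLemmas.

Unset Implicit Arguments.
Section Main.
Variables (p : nat) (S A : Type).
Hypothesis hp : prime p.
Local Notation G := (S -> 'F_p).
Variable D : G -> Prop.
Hypothesis Ddense : Gdelta_dense D.
Variable iot : G -> A.
Hypothesis iota_inj : forall f g, D f -> D g -> iot f = iot g -> f = g.
Variable E : (nat -> A) -> S.
Hypothesis E_inj : injective E.
Variable s0 : S.
Local Notation z0 := (@zzero p S).

Lemma exists_el (x : 'F_p) : exists d, D d /\ d s0 = x.
Proof.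
have hop : forall n : nat, zopen (fun g : G => g s0 = x).
  move=> _ g gx. exists [:: s0] => g' /= e. rewrite e //; by left.
have [d [Dd Hd]] := Ddense (fun (_ : nat) (g : G) => g s0 = x) hop (ex_intro _ (fun _ => x) (fun _ => erefl)).
by exists d; split => //; exact: (Hd 0%nat).
Qed.

Definition el x := proj1_sig (cid' (exists_el x)).
Lemma elD x : D (el x). Proof. exact: (proj1 (proj2_sig (cid' (exists_el x)))). Qed.
Lemma el_s0 x : el x s0 = x. Proof. exact: (proj2 (proj2_sig (cid' (exists_el x)))). Qed.

Definition code (u : nat -> G) : S := E (fun n => iot (u n)).
Definition Dseq (u : nat -> G) := forall n, D (u n).
Lemma code_inj u v : Dseq u -> Dseq v -> code u = code v -> u = v.
Proof.
move=> Du Dv /E_inj h. apply: functional_extensionality => n.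
apply: iota_inj => //. exact: (congr1 (fun f => f n) h).
Qed.

Definition hval (d : G) (s : S) : 'F_p :=
  match pdec (exists un : (nat -> G) * nat, Dseq un.1 /\ code un.1 = s /\ un.1 (un.2.*2) = d) with
  | left H => let un := proj1_sig (cid' H) in un.1 (un.2.*2).+1 s0
  | right _ => d s
  end.

Lemma hval_in u n : Dseq u ->
  (forall m k, u m.*2 = u k.*2 -> u (m.*2).+1 s0 = u (k.*2).+1 s0) ->
  hval (u n.*2) (code u) = u (n.*2).+1 s0.
Proof.
move=> Du cons; rewrite /hval; case: pdec => [H|[]]; last by exists (u, n).
case: (cid' H) => [[v m]] /= [Dv [cv evm]].
have ev : v = u by apply: code_inj.
subst v. exact: cons.
Qed.

Lemma hval_out d s : (forall u n, Dseq u -> code u = s -> u n.*2 <> d) -> hval d s = d s.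
Proof.
move=> H; rewrite /hval; case: pdec => [H'|//]; exfalso.
case: H' => [[u n] /= [Du [cu e]]]; exact: (H u n Du cu e).
Qed.

Lemma realize (lab : nat -> G) (w : nat -> 'F_p) :
  (forall i, D (lab i)) -> (forall i j, lab i = lab j -> w i = w j) ->
  exists s, forall i, hval (lab i) s = w i.
Proof.
move=> Dl cw.
pose u k := if odd k then el (w k./2) else lab k./2.
have u_even n : u n.*2 = lab n by rewrite /u odd_double doubleK.
have u_odd n : u (n.*2).+1 = el (w n) by rewrite /u /= odd_double /= uphalf_double.
have Du : Dseq u by move=> k; rewrite /u; case: ifP => _; [exact: elD | exact: Dl].
exists (code u) => i.
rewrite -u_even hval_in // ?u_odd ?el_s0 //.
move=> m k; rewrite !u_even !u_odd !el_s0; exact: cw.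
Qed.

Definition H (f : G) : Prop := exists d, D d /\ f = hval d.

Lemma H_indep : independent H.
Proof.
move=> n h c hinj Hh hsum i0.
pose dd i := proj1_sig (cid' (Hh i)).
have ddP i : D (dd i) /\ h i = hval (dd i) := proj2_sig (cid' (Hh i)).
pose lab k := dd (insubd i0 k).
pose w k : 'F_p := if insubd i0 k == i0 then 1 else 0.
have cons : forall i j, lab i = lab j -> w i = w j.
  move=> i j lij. have : h (insubd i0 i) = h (insubd i0 j).
    by rewrite (proj2 (ddP _)) (proj2 (ddP (insubd i0 j))) /lab -/(lab i) lij.
  by move/hinj; rewrite /w => ->.
have [s hs] := realize lab w (fun k => proj1 (ddP _)) cons.
have hi i : h i s = if i == i0 then 1 else 0.
  by rewrite (proj2 (ddP i)); have := hs i; rewrite /lab /w valKd.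
have := hsum s. rewrite (bigD1 i0) //= hi eqxx mulr1 big1 ?addr0 //.
by move=> j /negbTE; rewrite hi => ->; rewrite mulr0.
Qed.

Lemma H_dense : Gdelta_dense H.
Proof.
move=> U hU [f hf].
pose F n := proj1_sig (cid' (hU n f (hf n))).
have FP n : forall g, (forall i, List.In i (F n) -> g i = f i) -> U n g :=
  proj2_sig (cid' (hU n f (hf n))).
pose t m := let nm := Cantor.of_nat m in List.nth nm.2 (F nm.1) s0.
have tP n s : List.In s (F n) -> exists m, t m = s.
  move=> /(List.In_nth _ _ s0) [i [_ hi]]. exists (Cantor.to_nat (n, i)).
  by rewrite /t Cantor.cancel_of_to.
pose pre (s : S) : nat -> G :=
  match pdec (exists u, Dseq u /\ code u = s) with
  | left H => proj1_sig (cid' H) | right _ => fun _ => f end.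
have preP u s : Dseq u -> code u = s -> pre s = u.
  move=> Du cu; rewrite /pre; case: pdec => [H|[]]; last by exists u.
  case: (cid' H) => v [Dv cv] /=; apply: code_inj => //; by rewrite cv.
pose l m := let mk := Cantor.of_nat m in pre (t mk.1) (mk.2.*2).
have lP u j n s : Dseq u -> code u = s -> List.In s (F n) -> exists m, l m = u j.*2.
  move=> Du cu /tP [m tm]; exists (Cantor.to_nat (m, j)).
  by rewrite /l Cantor.cancel_of_to /= tm (preP u s).
pose a0 := iot (el 0); pose a1 := iot (el 1).
have a01 : a0 <> a1.
  move=> /iota_inj e; have := e (elD _) (elD _).
  move/(congr1 (fun g => g s0)); rewrite !el_s0 => /eqP; by rewrite eq_sym oner_eq0.
pose tau m : nat -> A := match pdec (exists sg, E sg = t m) with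
  | left H => proj1_sig (cid' H) | right _ => fun _ => a0 end.
pose sig k : nat -> A := fun j => if odd j then (if j./2 == k then a1 else a0)
  else (if pdec (tau j./2 j = a0) then a1 else a0).
pose r k := E (sig k).
have r_notin k m : r k <> t m.
  move=> e. have : tau m = sig k.
    rewrite /tau; case: pdec => [H|[]]; last by exists (sig k).
    case: (cid' H) => sg /= esg. apply: E_inj. by rewrite esg -e.
  move=> /(congr1 (fun g => g m.*2)). rewrite /sig odd_double doubleK.
  case: pdec => ht /=; [rewrite ht; exact: a01 | exact: ht].
have r_inj k k' : r k = r k' -> k = k'.
  move/E_inj/(congr1 (fun g => g (k.*2).+1)).
  rewrite /sig /= odd_double /= uphalf_double eqxx.
  by case: eqP => // _ /esym.
pose g0 : G := fun s => match pdec (exists k, r k = s) with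
  | left H => l (proj1_sig (cid' H)) s + 1 | right _ => f s end.
pose V m : G -> Prop := if odd m then (fun g => g (r m./2) = l m./2 (r m./2) + 1)
  else (fun g => forall i, List.In i (F m./2) -> g i = f i).
have Vopen m : zopen (V m).
  rewrite /V; case: ifP => _ g Vg.
  - exists [:: r m./2] => g' /= e. rewrite (e (r m./2)) //; by left.
  - exists (F m./2) => g' e i hi. rewrite e //. exact: Vg.
have Vg0 m : V m g0.
  rewrite /V; case: ifP => _.
  - rewrite /g0; case: pdec => [H|[]]; last by exists m./2.
    by case: (cid' H) => k /= /r_inj ->.
  - move=> i hi; rewrite /g0; case: pdec => // [[k rk]]. exfalso.
    have [m' tm] := tP _ _ hi. apply: (r_notin k m'). by rewrite rk tm.
have [d [Dd Vd]] := Ddense V Vopen (ex_intro _ g0 Vg0).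
have dl k : d <> l k.
  move=> e. have := Vd (k.*2).+1. rewrite /V /= odd_double /= uphalf_double e.
  rewrite -{1}[l k (r k)]addr0 => /addrI /eqP; by rewrite eq_sym oner_eq0.
exists (hval d); split; first by exists d.
move=> n; apply: FP => i hi.
rewrite hval_out; first by have := Vd n.*2; rewrite /V odd_double doubleK; apply.
move=> u j Du cu e. have [m lm] := lP u j n i Du cu hi. apply: (dl m). by rewrite lm e.
Qed.


Fixpoint allD (l : seq ('F_p * G)) : Prop :=
  match l with [::] => True | x :: l' => D x.2 /\ allD l' end.
Lemma allD_cat l1 l2 : allD l1 -> allD l2 -> allD (l1 ++ l2).
Proof. by elim: l1 => //= x l1 IH [? ?] ?; split => //; apply: IH. Qed.
Lemma allD_neg l : allD l -> allD (map (fun x => (- x.1, x.2)) l).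
Proof. by elim: l => //= x l IH [? ?]; split => //; apply: IH. Qed.
Lemma allD_nth l i : allD l -> D (nth (0, el 0) l i).2.
Proof.
elim: l i => [|x l IH] [|i] //=; try (by move=> _; exact: elD).
- by case. - by case=> _; apply: IH.
Qed.

Definition repG (l : seq ('F_p * G)) : G := fun s => \sum_(x <- l) x.1 * hval x.2 s.

Lemma gen_rep g : gen H g -> exists l, allD l /\ g = repG l.
Proof.
elim=> [f [d [Dd ->]] | | f g' _ [l1 [D1 ->]] _ [l2 [D2 ->]] | f _ [l [Dl ->]]].
- exists [:: (1, d)]; split => //. apply: functional_extensionality => s.
  by rewrite /repG big_seq1 mul1r.
- exists [::]; split => //. apply: functional_extensionality => s.
  by rewrite /repG big_nil.
- exists (l1 ++ l2); split; first exact: allD_cat.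
  apply: functional_extensionality => s. by rewrite /repG /zadd big_cat.
- exists (map (fun x => (- x.1, x.2)) l); split; first exact: allD_neg.
  apply: functional_extensionality => s.
  rewrite /repG /zopp big_map -sumrN; apply: eq_bigr => x _; by rewrite mulNr.
Qed.

Section Extend.
Variable lab : nat -> G.
Hypothesis labD : forall i, D (lab i).
Variable C : G -> Prop.
Hypothesis C0 : C z0.
Hypothesis Cadd : forall f g, C f -> C g -> C (zadd f g).
Hypothesis Copp : forall f, C f -> C (zopp f).
Variable phi : G -> 'F_p.
Hypothesis phi_add : forall f g, C f -> C g -> phi (zadd f g) = phi f + phi g.

Definition lin (F : nat -> 'F_p) (l : seq ('F_p * nat)) := \sum_(x <- l) x.1 * F x.2.
Definition repI (l : seq ('F_p * nat)) : G := fun s => lin (fun j => hval (lab j) s) l.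
Definition coefn n (l : seq ('F_p * nat)) := \sum_(x <- l | x.2 == n) x.1.
Definition okr g l := C g /\ forall s, g s = repI l s.
Definition bnd n (l : seq ('F_p * nat)) := all (fun x => x.2 < n)%nat l.

Lemma lin_split n F l :
  lin F l = \sum_(x <- l | x.2 != n) x.1 * F x.2 + coefn n l * F n.
Proof.
rewrite /lin /coefn (bigID (fun x => x.2 != n)) /=; congr (_ + _).
rewrite mulr_suml; apply: eq_big => [x|x]; first by rewrite negbK.
by rewrite negbK => /eqP ->.
Qed.

Lemma lin_drop n F l :
  lin F (filter (fun x => x.2 != n) l) = \sum_(x <- l | x.2 != n) x.1 * F x.2.
Proof. by rewrite /lin big_filter. Qed.

Lemma lin_relabel n i F l : F i = F n ->
  lin F (map (fun x => (x.1, if x.2 == n then i else x.2)) l) = lin F l.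
Proof.
move=> e; rewrite /lin big_map; apply: eq_bigr => x _ /=.
by case: eqP => // ->; rewrite e.
Qed.

Definition combo (a b : 'F_p) l l' : seq ('F_p * nat) :=
  map (fun x => (a * x.1, x.2)) l ++ map (fun x => (- (b * x.1), x.2)) l'.

Lemma lin_combo F a b l l' : lin F (combo a b l l') = a * lin F l - b * lin F l'.
Proof.
rewrite /lin /combo big_cat !big_map /= mulr_sumr mulr_sumr -sumrN.
congr (_ + _); apply: eq_bigr => x _; by rewrite ?mulNr mulrA.
Qed.

Lemma coefn_combo n a b l l' : coefn n (combo a b l l') = a * coefn n l - b * coefn n l'.
Proof.
rewrite /coefn /combo big_cat !big_map /= mulr_sumr mulr_sumr -sumrN.
by congr (_ + _); apply: eq_bigr => x _.
Qed.

Lemma bnd_combo n a b l l' : bnd n l -> bnd n l' -> bnd n (combo a b l l').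
Proof. by rewrite /bnd /combo all_cat !all_map => -> ->. Qed.

Lemma bnd_drop n l : bnd n.+1 l -> bnd n (filter (fun x => x.2 != n) l).
Proof.
rewrite /bnd all_filter => /allP h; apply/allP => x xl; apply/implyP => xn.
by rewrite ltn_neqAle xn -ltnS (h x xl).
Qed.

Lemma bnd_relabel n i l : (i < n)%nat -> bnd n.+1 l ->
  bnd n (map (fun x => (x.1, if x.2 == n then i else x.2)) l).
Proof.
move=> iN; rewrite /bnd all_map => /allP h; apply/allP => x xl /=.
case: eqP => // /eqP xn. by rewrite ltn_neqAle xn -ltnS (h x xl).
Qed.

Lemma zadd00 : zadd z0 z0 = (z0 : G).
Proof. apply: functional_extensionality => s; by rewrite /zadd /zzero addr0. Qed.
Lemma phi0 : phi z0 = 0.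
Proof.
have := phi_add _ _ C0 C0; rewrite zadd00 -{1}[phi z0]addr0 => /addrI; by move<-.
Qed.
Lemma phiN f : C f -> phi (zopp f) = - phi f.
Proof.
move=> Cf; apply: (@addrI _ (phi f)); rewrite -(phi_add _ _ Cf (Copp _ Cf)) subrr.
have -> : zadd f (zopp f) = z0 by apply: functional_extensionality => s; rewrite /zadd /zopp /zzero subrr.
exact: phi0.
Qed.
Definition nadd k (g : G) : G := iter k (zadd g) z0.
Lemma nadd_val k g s : nadd k g s = g s *+ k.
Proof. elim: k => [|k IH] //=. by rewrite /zadd IH mulrS. Qed.
Lemma naddC k g : C g -> C (nadd k g).
Proof. move=> Cg; elim: k => [|k IH] //=; exact: Cadd. Qed.
Lemma phi_nadd k g : C g -> phi (nadd k g) = phi g *+ k.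
Proof.
move=> Cg; elim: k => [|k IH] /=; first exact: phi0.
by rewrite (phi_add _ _ Cg (naddC k g Cg)) IH mulrS.
Qed.
Definition scale (c : 'F_p) (g : G) : G := fun s => c * g s.
Lemma scale_nadd c g : scale c g = nadd (nat_of_ord c) g.
Proof.
apply: functional_extensionality => s; by rewrite nadd_val /scale -mulr_natl (Fp_valK hp).
Qed.
Lemma scaleC c g : C g -> C (scale c g).
Proof. by move=> Cg; rewrite scale_nadd; apply: naddC. Qed.
Lemma phi_scale c g : C g -> phi (scale c g) = c * phi g.
Proof. by move=> Cg; rewrite scale_nadd phi_nadd // -mulr_natl (Fp_valK hp). Qed.

Definition newval (n : nat) (prev : nat -> 'F_p) : 'F_p :=
  match pdec (exists i, (i < n)%nat /\ lab i = lab n) with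
  | left Hx => prev (proj1_sig (cid' Hx))
  | right _ =>
    match pdec (exists gl : G * seq ('F_p * nat),
                 okr gl.1 gl.2 /\ bnd n.+1 gl.2 /\ coefn n gl.2 != 0) with
    | left Hy => let gl := proj1_sig (cid' Hy) in
                 (phi gl.1 - \sum_(x <- gl.2 | x.2 != n) x.1 * prev x.2) / coefn n gl.2
    | right _ => 0
    end
  end.

Fixpoint W (n : nat) : nat -> 'F_p :=
  match n with
  | 0 => fun _ => 0
  | n'.+1 => fun i => if (i < n')%nat then W n' i else newval n' (W n')
  end.
Definition w (n : nat) := W n.+1 n.

Lemma W_w m i : (i < m)%nat -> W m i = w i.
Proof.
elim: m => [//|m IH] im /=.
case: ifP => [/IH //|]; move=> /negbT; rewrite -leqNgt => mi.
have -> : i = m by apply/eqP; rewrite eqn_leq mi -ltnS im.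
by rewrite /w /= ltnn.
Qed.

Lemma newval_ext n prev prev' : (forall i, (i < n)%nat -> prev i = prev' i) ->
  newval n prev = newval n prev'.
Proof.
move=> e; rewrite /newval; case: pdec => [Hx|_].
  by case: (cid' Hx) => i [i_n _] /=; apply: e.
case: pdec => [Hy|//]; case: (cid' Hy) => [[g l]] /= [_ [bl _]].
congr ((_ - _) / _); rewrite big_seq_cond [RHS]big_seq_cond; apply: eq_bigr.
move=> x /andP [xl xn]; rewrite e //.
move/allP: bl => /(_ x xl) /=; by rewrite ltnS leq_eqVlt (negbTE xn).
Qed.

Lemma w_def n : w n = newval n w.
Proof. rewrite /w /= ltnn; apply: newval_ext => i; exact: W_w. Qed.

Lemma w_cons_lt j : forall i, (i < j)%nat -> lab i = lab j -> w i = w j.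
Proof.
elim/ltn_ind: j => j IH i ij lij.
rewrite (w_def j) /newval; case: pdec => [Hx|[]]; last by exists i.
case: (cid' Hx) => i' [i'j li'] /=.
case: (ltngtP i i') => [ii'|i'i|-> //].
- apply: (IH i' i'j i ii'); by rewrite lij li'.
- symmetry; apply: (IH i ij i' i'i); by rewrite lij li'.
Qed.

Lemma w_cons i j : lab i = lab j -> w i = w j.
Proof.
case: (ltngtP i j) => [ij|ji|-> //] e; first exact: w_cons_lt.
by symmetry; apply: w_cons_lt.
Qed.

Definition Pinv n := forall g l, okr g l -> bnd n l -> lin w l = phi g.

Lemma P0 : Pinv 0.
Proof.
move=> g [|x l] [Cg rg] //= _.
have -> : g = z0 by apply: functional_extensionality => s; rewrite rg /repI /lin big_nil.
by rewrite phi0 /lin big_nil.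
Qed.

Lemma drop_ok n g l : Pinv n -> okr g l -> bnd n.+1 l -> coefn n l = 0 -> lin w l = phi g.
Proof.
move=> IH [Cg rg] bl c0.
rewrite (lin_split n) c0 mul0r addr0 -lin_drop; apply: IH; last exact: bnd_drop.
split=> // s; rewrite rg /repI (lin_split n) c0 mul0r addr0 lin_drop //.
Qed.

Lemma P_step n : Pinv n -> Pinv n.+1.
Proof.
move=> IH g l okl bl.
have wn := w_def n; rewrite /newval in wn.
case: pdec wn => [Hx|nHx] wn.
  case: (cid' Hx) wn => i [i_n li] /= wn.
  rewrite -(lin_relabel n i w l (esym wn)).
  case: okl => Cg rg.
  apply: IH; last exact: bnd_relabel.
  split=> // s; rewrite rg /repI lin_relabel // li //.
case: (eqVneq (coefn n l) 0) => [c0|cn0]; first exact: (drop_ok n g l IH okl bl c0).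
case: pdec wn => [Hy|nHy] wn; last by exfalso; apply: nHy; exists (g, l); split; [|split].
case: (cid' Hy) wn => [[g' l']] /= [okl' [bl' cn0']] wn.
case: okl => Cg rg; case: okl' => Cg' rg'.
set a := coefn n l in cn0 *; set a' := coefn n l' in cn0' wn *.
pose g'' := zadd (scale a' g) (zopp (scale a g')).
have Cg'' : C g'' by apply: Cadd; [apply: scaleC | apply: Copp; apply: scaleC].
have okL : okr g'' (combo a' a l l').
  split=> // s; rewrite /repI lin_combo -/(repI l s) -/(repI l' s) -rg -rg'.
  by rewrite /g'' /zadd /zopp /scale.
have cL : coefn n (combo a' a l l') = 0 by rewrite coefn_combo mulrC subrr.
have := drop_ok n _ _ IH okL (bnd_combo _ _ _ _ _ bl bl') cL.
rewrite lin_combo /g'' (phi_add _ _ (scaleC _ _ Cg) (Copp _ (scaleC _ _ Cg'))) phiN ?phi_scale //; last exact: scaleC.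
have -> : lin w l' = phi g'.
  rewrite (lin_split n) wn -/a' mulrC divfK // addrC subrK //.
move/addIr; exact: mulfI.
Qed.

Lemma P_all n : Pinv n.
Proof. elim: n => [|n IH]; [exact: P0 | exact: P_step]. Qed.

Lemma extend_exists : exists s, forall g l, okr g l -> g s = phi g.
Proof.
have [s hs] := realize lab w labD w_cons.
exists s => g l okl.
have bndf : forall l0 : seq ('F_p * nat), bnd (foldr (fun x m => maxn x.2.+1 m) 0%nat l0) l0.
  rewrite /bnd; elim=> //= x l0 IH.
  rewrite leq_max ltnSn /=; apply: sub_all IH => y /= h.
  by rewrite (leq_trans h) // leq_maxr.
have bl := bndf l.
rewrite (proj2 okl) -(P_all _ g l okl bl) /repI /lin.
apply: eq_bigr => x _; by rewrite hs.
Qed.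

End Extend.

Lemma find_coord (C : G -> Prop) : C z0 ->
  (forall f g, C f -> C g -> C (zadd f g)) -> (forall f, C f -> C (zopp f)) ->
  (forall f, C f -> gen H f) ->
  (exists eC : G -> nat, forall f g, C f -> C g -> eC f = eC g -> f = g) ->
  forall phi : G -> 'F_p, (forall f g, C f -> C g -> phi (zadd f g) = phi f + phi g) ->
  exists s, forall f, C f -> f s = phi f.
Proof.
move=> C0 Cadd Copp CN [eC eCi] phi phiadd.
pose repL (g : G) : seq ('F_p * G) :=
  match pdec (exists l, allD l /\ g = repG l) with
  | left Hl => proj1_sig (cid' Hl) | right _ => [::] end.
have repLP g : C g -> allD (repL g) /\ g = repG (repL g).
  move=> Cg; rewrite /repL; case: pdec => [Hl|[]]; last exact: gen_rep (CN g Cg).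
  exact: proj2_sig (cid' Hl).
pose cC k : G := match pdec (exists g, C g /\ eC g = k) with
  | left Hc => proj1_sig (cid' Hc) | right _ => z0 end.
have cCC k : C (cC k).
  rewrite /cC; case: pdec => [Hc|_] //; exact: (proj1 (proj2_sig (cid' Hc))).
have cCe g : C g -> cC (eC g) = g.
  move=> Cg; rewrite /cC; case: pdec => [Hc|[]]; last by exists g.
  case: (cid' Hc) => g' [Cg' e] /=; exact: eCi.
pose lab m := let ki := Cantor.of_nat m in (nth (0, el 0) (repL (cC ki.1)) ki.2).2.
have labD m : D (lab m) by apply: allD_nth; exact: (proj1 (repLP _ (cCC _))).
have [s hs] := extend_exists lab labD C C0 Cadd Copp phi phiadd.
exists s => g Cg.
pose L := repL g.
have hh := hs g [seq ((nth (0, el 0) L i).1, Cantor.to_nat (eC g, i)) | i <- seq.iota 0 (size L)].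
apply: hh.
split => // s'.
have eg := proj2 (repLP g Cg).
transitivity (repG L s'); first by rewrite -eg.
rewrite /repG /repI /lin big_map (big_nth (0, el 0)) /index_iota subn0.
apply: eq_bigr => i _. rewrite /lab Cantor.cancel_of_to. by rewrite cCe.
Qed.

End Main.

Unset Implicit Arguments.

Definition emb (z : R * R) : R[i] := (z.1 +i* z.2)%C.
Lemma emb_cmul z w : emb (cmul z w) = emb z * emb w.
Proof. by case: z => a b; case: w => c d. Qed.
Lemma emb_inj : injective emb.
Proof. by case=> a b [c d] [-> ->]. Qed.
Lemma emb1 : emb (R1, R0) = 1. Proof. reflexivity. Qed.
Definition zpow (z : R * R) (n : nat) : R * R := iter n (cmul z) (R1, R0).
Lemma emb_zpow z n : emb (zpow z n) = emb z ^+ n.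
Proof. elim: n => [|n IH] /=; first exact: emb1. by rewrite emb_cmul -/(zpow z n) IH exprS. Qed.

Lemma circle1 : on_circle (R1, R0).
Proof. rewrite /on_circle /=. ring. Qed.
Lemma cmul_circle z w : on_circle z -> on_circle w -> on_circle (cmul z w).
Proof.
case: z => a b; case: w => c d; rewrite /on_circle /cmul /= => hz hw.
have -> : Rplus (Rmult (Rminus (Rmult a c) (Rmult b d)) (Rminus (Rmult a c) (Rmult b d)))
   (Rmult (Rplus (Rmult a d) (Rmult b c)) (Rplus (Rmult a d) (Rmult b c)))
   = Rmult (Rplus (Rmult a a) (Rmult b b)) (Rplus (Rmult c c) (Rmult d d)) by ring.
rewrite hz hw; ring.
Qed.
Lemma zpow_circle z n : on_circle z -> on_circle (zpow z n).
Proof. move=> hz; elim: n => [|n IH] /=; [exact: circle1 | exact: cmul_circle]. Qed.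
Lemma emb_neq0 z : on_circle z -> emb z != 0.
Proof.
case: z => a b; rewrite /on_circle /= => h; apply/eqP => -[ha hb].
move: h; rewrite ha hb Rmult_0_l Rplus_0_l => /esym; exact: R1_neq_R0.
Qed.

Section Circle.
Variables (p : nat) (S : Type).
Hypothesis hp : prime p.
Local Notation G := (S -> 'F_p).
Local Notation z0 := (@zzero p S).

Lemma key_char (C : G -> Prop) (chi : G -> R * R) :
  C z0 -> (forall f g, C f -> C g -> C (zadd f g)) ->
  (forall f, C f -> on_circle (chi f)) ->
  (forall f g, C f -> C g -> chi (zadd f g) = cmul (chi f) (chi g)) ->
  exists zeta, on_circle zeta /\ emb zeta ^+ p = 1 /\
    exists phi : G -> 'F_p, (forall f g, C f -> C g -> phi (zadd f g) = phi f + phi g) /\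
      forall f, C f -> emb (chi f) = emb zeta ^+ (nat_of_ord (phi f)).
Proof.
move=> C0 Cadd chic chih.
have z00 : zadd z0 z0 = z0 by apply: functional_extensionality => s; rewrite /zadd /zzero addr0.
have chi0 : emb (chi z0) = 1.
  have := congr1 emb (chih _ _ C0 C0); rewrite z00 emb_cmul.
  rewrite -{1}[emb (chi z0)]mulr1 => /(mulfI (emb_neq0 _ (chic _ C0))); by move<-.
pose it k (f : G) : G := iter k (zadd f) z0.
have itC k f : C f -> C (it k f) by move=> Cf; elim: k => [|k IH] //=; exact: Cadd.
have itchi k f : C f -> emb (chi (it k f)) = emb (chi f) ^+ k.
  move=> Cf; elim: k => [|k IH] /=; first exact: chi0.
  by rewrite (chih _ _ Cf (itC k f Cf)) emb_cmul -/(it k f) IH exprS.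
have itp f : it p f = z0.
  apply: functional_extensionality => s.
  have -> : forall k, it k f s = f s *+ k.
    by elim=> [|k IH] //=; rewrite /zadd -/(it k f) IH mulrS.
  by rewrite -mulr_natr (pchar_Fp_0 hp) mulr0.
have pw f : C f -> emb (chi f) ^+ p = 1 by move=> Cf; rewrite -itchi // itp.
case: (pdec (exists f, C f /\ emb (chi f) != 1)) => [[fs [Cfs nfs]]|nex].
- set z := emb (chi fs).
  have [m pm mdvd] := prim_order_exists (prime_gt0 hp) (pw fs Cfs).
  have prim : p.-primitive_root z.
    case/primeP: hp => _ /(_ m mdvd) /orP [/eqP m1|/eqP mp]; last by rewrite -mp.
    move: pm; rewrite m1 => /prim_expr_order; rewrite expr1 => z1.
    by move: nfs; rewrite /z z1 eqxx.
  pose phi (f : G) : 'F_p := match pdec (C f) with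
    | left Cf => (nat_of_ord (proj1_sig (prim_rootP prim (pw f Cf))))%:R
    | right _ => 0 end.
  have phiP f : C f -> emb (chi f) = z ^+ (nat_of_ord (phi f)).
    move=> Cf; rewrite /phi; case: pdec => // Cf'.
    case: (prim_rootP prim (pw f Cf')) => i /= ->.
    by rewrite (val_Fp_nat hp) modn_small.
  exists (chi fs); split; first exact: chic.
  split; first exact: (pw fs Cfs).
  exists phi; split => // f g Cf Cg.
  apply: val_inj; change (nat_of_ord (phi (zadd f g)) = nat_of_ord (phi f + phi g)); rewrite (Fp_addv hp).
  have : z ^+ (nat_of_ord (phi (zadd f g))) = z ^+ (nat_of_ord (phi f) + nat_of_ord (phi g)).
    by rewrite -(phiP _ (Cadd _ _ Cf Cg)) (chih _ _ Cf Cg) emb_cmul (phiP _ Cf) (phiP _ Cg) exprD.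
  move/eqP; rewrite (eq_prim_root_expr prim) => /eqP <-.
  by rewrite modn_small // (Fp_lt hp).
- exists (R1, R0); split; first exact: circle1.
  split; first by rewrite emb1 expr1n.
  exists (fun _ => 0); split => [f g _ _|f Cf]; first by rewrite addr0.
  rewrite emb1 expr0; case: (eqVneq (emb (chi f)) 1) => // ne.
  by exfalso; apply: nex; exists f.
Qed.

Lemma embed_from_coord (N C : G -> Prop) (chi : G -> R * R) zeta (phi : G -> 'F_p) s :
  on_circle zeta -> emb zeta ^+ p = 1 ->
  (forall f, C f -> emb (chi f) = emb zeta ^+ (nat_of_ord (phi f))) ->
  (forall f, C f -> f s = phi f) ->
  exists psi : G -> R * R,
      (forall f, N f -> on_circle (psi f)) /\
      (forall f g, N f -> N g -> psi (zadd f g) = cmul (psi f) (psi g)) /\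
      continuous_on N psi /\
      (forall f, C f -> psi f = chi f).
Proof.
move=> zc zp chiP fs.
exists (fun f => zpow zeta (nat_of_ord (f s))); split; [|split; [|split]].
- move=> f _; exact: zpow_circle.
- move=> f g _ _; apply: emb_inj.
  by rewrite emb_cmul !emb_zpow /zadd (Fp_addv hp) (expr_mod _ zp) exprD.
- move=> f _ eps heps; exists [:: s] => g _ e.
  rewrite (e s (or_introl erefl)) /circ_dist Rminus_diag Rminus_diag Rabs_R0 Rmax_left //.
  exact: Rle_refl.
- move=> f Cf; apply: emb_inj; by rewrite emb_zpow fs // chiP.
Qed.
End Circle.

Theorem proposition3p4 (p : nat) (S A : Type) :
  prime p ->
  (exists e : nat -> S, injective e) ->              (* sigma infinite *)
  m_le p S A ->                                       (* m(sigma) <= alpha *)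
  (exists e : (nat -> A) -> S, injective e) ->       (* alpha^omega <= sigma *)
  exists H : (S -> 'F_p) -> Prop,
    independent H /\ Gdelta_dense H /\ property_h (gen H).
Proof.
move=> hp [e _] [D [Dd [io ioi]]] [E Ei].
exists (H p S A D io E (e 0)); split; first exact: (H_indep p S A D Dd io ioi E Ei).
split; first exact: (H_dense p S A D Dd io ioi E Ei).
move=> C [C0 [Cadd Copp]] CN Ccount chi chic chih.
have [zeta [zc [zp [phi [phiadd phiP]]]]] := key_char p S hp C chi C0 Cadd chic chih.
have [s hs] := find_coord p S A hp D Dd io ioi E Ei (e 0) C C0 Cadd Copp CN Ccount phi phiadd.
exact: (embed_from_coord p S hp _ C chi zeta phi s zc zp phiP hs).
Qed.
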